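(* Let $T$ be a commutative ring with identity, $S$ a unital subring and $I$ a nil ideal of $T$ with $T=S+I$ and $S\cap I=\{0\}$. If $S$ is roughly complemented and $I$ is an atorsion $S$-module, then $T$ is roughly complemented. If furthermore $I^2=0$, then the converse holds. In particular, for a commutative ring $R$ and $R$-module $M$, $R\propto M$ is roughly complemented if and only if $R$ is roughly complemented and $M$ is an atorsion $R$-module.
   Context: For a ring $A$: $\mathfrak{N}(A)$ is the nilradical, $\mathrm{reg}(A)$ the regular elements, $\mathrm{areg}(A)=\{x: x+\mathfrak{N}(A)\in\mathrm{reg}(A/\mathfrak{N}(A))\}$. $A$ is roughly complemented if for every $a\in A$ there is $b$ with $ab=0$ and $a+b\in\mathrm{areg}(A)$. An $A$-module $M$ is atorsion if for each $m\in M$ there is $r\in\mathrm{areg}(A)$ with $rm=0$. $R\propto M$ is $R\times M$ with coordinatewise addition and $(r,m)(s,n)=(rs,rn+sm)$. *)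

(* Defs.v *)
From HB Require Import structures.
From mathcomp Require Import all_boot all_order all_algebra.
Set Implicit Arguments. Unset Strict Implicit. Unset Printing Implicit Defensive.
Import Order.TTheory GRing.Theory Num.Theory.
Local Open Scope ring_scope.

Definition nilpotent_el (A : pzRingType) (x : A) : Prop := exists n : nat, x ^+ n = 0.

(* Notions relative to a subring S of A (given as a predicate S : pred A);
   for S = predT these are the notions for A itself.  Since S carries the
   operations of A, N(S) = S ∩ N(A). *)

(* x + N(S) is a regular element of S/N(S):
   for all y in S, (x+N(S))(y+N(S)) = 0 implies y + N(S) = 0,
   i.e. xy ∈ N(S) implies y ∈ N(S). *)
Definition areg_in (A : comPzRingType) (S : pred A) (x : A) : Prop :=
  x \in S /\ forall y, y \in S -> nilpotent_el (x * y) -> nilpotent_el y.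

Definition rough_compl_in (A : comPzRingType) (S : pred A) : Prop :=
  forall a, a \in S -> exists2 b, b \in S & a * b = 0 /\ areg_in S (a + b).

Definition areg (A : comPzRingType) (x : A) : Prop := areg_in predT x.
Definition roughly_complemented (A : comPzRingType) : Prop :=
  rough_compl_in (@predT A).

(* I is an atorsion S-module (S acting on I by multiplication in A). *)
Definition atorsion_in (A : comPzRingType) (S I : pred A) : Prop :=
  forall m, m \in I -> exists r, areg_in S r /\ r * m = 0.

Definition atorsion (R : comPzRingType) (M : lmodType R) : Prop :=
  forall m : M, exists r : R, areg r /\ r *: m = 0.

Definition unital_subring (A : pzRingType) (S : pred A) : Prop :=
  [/\ 1 \in S, forall x y, x \in S -> y \in S -> x - y \in S
    & forall x y, x \in S -> y \in S -> x * y \in S].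

Definition is_ideal (A : comPzRingType) (I : pred A) : Prop :=
  [/\ 0 \in I, forall x y, x \in I -> y \in I -> x + y \in I
    & forall t x, x \in I -> t * x \in I].

Definition nil_ideal (A : comPzRingType) (I : pred A) : Prop :=
  is_ideal I /\ forall x, x \in I -> nilpotent_el x.

Definition idealization (R : comPzRingType) (M : lmodType R) := (R * M)%type.

Section Idealization.
Variables (R : comPzRingType) (M : lmodType R).
Local Notation RM := (idealization M).
HB.instance Definition _ := GRing.Zmodule.copy RM (R * M)%type.

Definition id_one : RM := (1, 0).
Definition id_mul (x y : RM) : RM := (x.1 * y.1, x.1 *: y.2 + y.1 *: x.2).

Lemma id_mulA : associative id_mul.
Proof.
case=> a m [b n] [c p]; rewrite /id_mul /=; congr pair; first by rewrite mulrA.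
rewrite !scalerDr !scalerA [c * a]mulrC [c * b]mulrC [b * c]mulrC.
by rewrite addrA.
Qed.

Lemma id_mulC : commutative id_mul.
Proof. by case=> a m [b n]; rewrite /id_mul /= mulrC addrC. Qed.

Lemma id_mul1 : left_id id_one id_mul.
Proof. by case=> a m; rewrite /id_mul /= mul1r scale1r scaler0 addr0. Qed.

Lemma id_mulDl : left_distributive id_mul +%R.
Proof.
case=> a m [b n] [c p]; rewrite /id_mul /=; congr pair; first by rewrite mulrDl.
by rewrite scalerDl scalerDr; rewrite -!addrA; congr (_ + _);
  rewrite addrCA.
Qed.

HB.instance Definition _ := GRing.Zmodule_isComPzRing.Build RM
  id_mulA id_mulC id_mul1 id_mulDl.
End Idealization.

Notation "R ∝ M" := (@idealization R M) (at level 40, only parsing).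

(* Main.v *)
Require Import Defs.
From HB Require Import structures.
From mathcomp Require Import all_boot all_order all_algebra ring.
Local Open Scope ring_scope.
Import GRing.Theory.

Lemma nil_add (A : comPzRingType) (x y : A) :
  nilpotent_el x -> nilpotent_el y -> nilpotent_el (x + y).
Proof.
case=> m hm [n hn]; exists (m + n)%N; rewrite exprDn big1 // => i _.
have [lt|le] := ltnP i n.
  have -> : (m + n - i = m + (n - i))%N by rewrite addnBA // ltnW.
  by rewrite exprD hm !mul0r mul0rn.
have -> : (i = n + (i - n) :> nat)%N by rewrite subnKC.
by rewrite exprD hn mul0r mulr0 mul0rn.
Qed.

Lemma nil_mull (A : comPzRingType) (x y : A) : nilpotent_el y -> nilpotent_el (x * y).
Proof. by case=> n hn; exists n; rewrite exprMn hn mulr0. Qed.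

Lemma nil_sq (A : comPzRingType) (x y : A) : nilpotent_el (x * x * y) -> nilpotent_el (x * y).
Proof.
case=> n hn; exists (n + n)%N; rewrite exprD.
have -> : (x * y) ^+ n * (x * y) ^+ n = (x * x * y) ^+ n * y ^+ n.
  by rewrite -!exprMn; congr (_ ^+ n); ring.
by rewrite hn mul0r.
Qed.

Lemma part1a (T : comPzRingType) (S I : pred T) :
     unital_subring S -> nil_ideal I ->
     (forall t : T, exists s i, [/\ s \in S, i \in I & t = s + i]) ->
     rough_compl_in S -> atorsion_in S I -> roughly_complemented T.
Proof.
move=> [S1 SB SM] [[I0 ID IM] In] dec rcS atS a _.
have S0 : 0 \in S by rewrite -(subrr 1) SB.
have SN x : x \in S -> -x \in S by move=> h; rewrite -sub0r SB.
have SD x y : x \in S -> y \in S -> x + y \in S.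
  by move=> hx hy; rewrite -(opprK y) SB // SN.
have [s [i [hs hi ->]]] := dec a.
have [b' hb' [sb' [_ ab]]] := rcS s hs.
have [r [[hr ar] ri]] := atS i hi.
exists (b' * r) => //.
split.
  by rewrite mulrDl mulrA sb' mul0r add0r mulrCA (mulrC i r) ri mulr0.
have hc : areg_in S (s + b' * r).
  split; first by apply: (SD) => //; apply: SM.
  move=> z hz hn.
  have h1 : nilpotent_el (s * z).
    apply: nil_sq.
    have <- : s * ((s + b' * r) * z) = s * s * z.
      by rewrite mulrA mulrDr mulrA sb' mul0r addr0.
    exact: nil_mull.
  have h2 : nilpotent_el (b' * z).
    apply: (ar); first exact: SM.
    rewrite mulrCA; apply: nil_sq.
    have <- : b' * ((s + b' * r) * z) = b' * b' * (r * z).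
      by rewrite mulrDl mulrDr mulrA (mulrC b' s) sb' mul0r add0r !mulrA.
    exact: nil_mull.
  by apply: (ab) => //; rewrite mulrDl; apply: nil_add.
split => // y _ hxy.
have [s' [i' [hs' hi' ey]]] := dec y; rewrite ey in hxy *.
have E : (s + i + b' * r) * (s' + i') =
         (s + b' * r) * s' + ((s + b' * r) * i' + i * (s' + i')) by ring.
rewrite E in hxy.
have hj : (s + b' * r) * i' + i * (s' + i') \in I.
  by apply: (ID); [apply: (IM) | rewrite mulrC; apply: (IM)].
apply: nil_add (In _ hi'); apply: (hc.2) => //.
rewrite -(addrK ((s + b' * r) * i' + i * (s' + i')) ((s + b' * r) * s')).
apply: nil_add hxy _; apply: (In); rewrite -mulN1r; exact: IM.
Qed.

Lemma part1b (T : comPzRingType) (S I : pred T) :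
     unital_subring S -> nil_ideal I ->
     (forall t : T, exists s i, [/\ s \in S, i \in I & t = s + i]) ->
     (forall x : T, x \in S -> x \in I -> x = 0) ->
     (forall x y : T, x \in I -> y \in I -> x * y = 0) ->
        roughly_complemented T -> rough_compl_in S /\ atorsion_in S I.
Proof.
move=> [S1 SB SM] [[I0 ID IM] In] dec disj I2 rcT.
have S0 : 0 \in S by rewrite -(subrr 1) SB.
have SN x : x \in S -> -x \in S by move=> h; rewrite -sub0r SB.
have SD x y : x \in S -> y \in S -> x + y \in S.
  by move=> hx hy; rewrite -(opprK y) SB // SN.
split.
  move=> a ha.
  have [b _ [ab [_ arT]]] := rcT a isT.
  have [s' [i' [hs' hi' eb]]] := dec b; subst b.
  exists s' => //; split.
    apply: disj; first exact: SM.
    have -> : a * s' = - (a * i') by apply/eqP; rewrite -addr_eq0 -mulrDr ab.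
    rewrite -mulN1r; apply: (IM); exact: IM.
  split; first exact: SD.
  move=> y hy hn; apply: (arT) => //.
  rewrite addrA mulrDl; apply: nil_add hn _; apply: In.
  by rewrite mulrC; apply: IM.
move=> m hm.
have [b _ [mb [_ arT]]] := rcT m isT.
have [s [i [hs hi eb]]] := dec b; subst b.
exists s; split.
  split => // y hy hn; apply: (arT) => //.
  rewrite addrCA mulrDl; apply: nil_add hn _; apply: In.
  by rewrite mulrC; apply: (IM); apply: ID.
by rewrite mulrC; move: mb; rewrite mulrDr (I2 m i) // addr0.
Qed.

Section Ideal.
Variables (R : comPzRingType) (M : lmodType R).
Local Notation T := (idealization M).

Definition SS : pred T := [pred x : T | x.2 == 0].
Definition II : pred T := [pred x : T | x.1 == 0].

Lemma mulE (a b : R) (m n : M) : ((a, m) : T) * (b, n) = (a * b, a *: n + b *: m).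
Proof. by []. Qed.

Lemma expE (r : R) n : ((r, 0) : T) ^+ n = (r ^+ n, 0).
Proof.
elim: n => [|n IH]; first by [].
by rewrite exprS IH mulE !scaler0 addr0 exprS.
Qed.

Lemma nilE (r : R) : nilpotent_el ((r, 0) : T) <-> nilpotent_el r.
Proof.
split; case=> n hn; exists n.
  by move: hn; rewrite expE => /(congr1 fst).
by rewrite expE hn.
Qed.

Lemma aregE (r : R) : areg_in SS (r, 0) <-> areg r.
Proof.
split.
  move=> [_ h]; split => // y _ hn.
  apply/nilE; apply: h; first by rewrite inE /=.
  by rewrite mulE !scaler0 addr0; apply/nilE.
move=> [_ h]; split; first by rewrite inE /=.
case=> y m; rewrite inE /= => /eqP -> hn.
apply/nilE; apply: h => //; apply/nilE.
by move: hn; rewrite mulE !scaler0 addr0.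
Qed.

Lemma SSE {x : T} : x \in SS -> x = (x.1, 0).
Proof. by case: x => a m; rewrite inE /= => /eqP ->. Qed.

Lemma hypS : unital_subring SS.
Proof.
split; first by rewrite inE.
  by case=> a m [b n]; rewrite !inE /= => /eqP -> /eqP ->; rewrite subr0.
by case=> a m [b n]; rewrite !inE /= => /eqP -> /eqP ->; rewrite !scaler0 addr0.
Qed.

Lemma hypI : nil_ideal II.
Proof.
split; first split.
- by rewrite inE.
- by case=> a m [b n]; rewrite !inE /= => /eqP -> /eqP ->; rewrite addr0.
- by case=> a m [b n]; rewrite !inE /= => /eqP ->; rewrite mulr0.
case=> a m; rewrite inE /= => /eqP ->; exists 2%N.
by rewrite expr2 mulE mulr0 !scale0r addr0.
Qed.

Lemma hypdec (t : T) : exists s i, [/\ s \in SS, i \in II & t = s + i].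
Proof.
case: t => a m; exists (a, 0), (0, m); split; rewrite ?inE //=.
have -> : ((a, 0) : T) + (0, m) = (a + 0, 0 + m) by [].
by rewrite addr0 add0r.
Qed.

Lemma hypdisj (x : T) : x \in SS -> x \in II -> x = 0.
Proof. by case: x => a m; rewrite !inE /= => /eqP -> /eqP ->. Qed.

Lemma hypI2 (x y : T) : x \in II -> y \in II -> x * y = 0.
Proof.
case: x => a m; case: y => b n; rewrite !inE /= => /eqP -> /eqP ->.
by rewrite mulE mulr0 !scale0r addr0.
Qed.

Lemma rcE : rough_compl_in SS <-> roughly_complemented R.
Proof.
split.
  move=> h a _.
  have [b hb [ab hr]] := h (a, 0) (eqxx _).
  rewrite (SSE hb) in ab hr.
  exists b.1 => //; split.
    by move: ab; rewrite mulE => /(congr1 fst).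
  have e : ((a, 0) : T) + (b.1, 0) = (a + b.1, 0 + 0) by [].
  by move: hr; rewrite e addr0; exact: (proj1 (aregE _)).
move=> h x hx; rewrite (SSE hx).
have [b _ [ab hr]] := h x.1 isT.
exists (b, 0); first by rewrite inE.
split; first by rewrite mulE ab !scaler0 addr0.
have -> : ((x.1, 0) : T) + (b, 0) = (x.1 + b, 0 + 0) by [].
by rewrite addr0; exact: (proj2 (aregE _)).
Qed.

Lemma atE : atorsion_in SS II <-> atorsion M.
Proof.
split.
  move=> h m.
  have [r [hr rm]] := h (0, m) (eqxx _).
  have hr1 := SSE hr.1; rewrite hr1 in hr rm.
  exists r.1; split; first exact/aregE.
  by move: rm; rewrite mulE scaler0 addr0 => /(congr1 snd).
move=> h [a m]; rewrite inE /= => /eqP ->.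
have [r [hr rm]] := h m.
exists (r, 0); split; first exact/aregE.
by rewrite mulE rm mulr0 scaler0 addr0.
Qed.

End Ideal.

Theorem mainTheorem18 :
  (forall (T : comPzRingType) (S I : pred T),
     unital_subring S -> nil_ideal I ->
     (forall t : T, exists s i, [/\ s \in S, i \in I & t = s + i]) ->
     (forall x : T, x \in S -> x \in I -> x = 0) ->
     (rough_compl_in S -> atorsion_in S I -> roughly_complemented T) /\
     ((forall x y : T, x \in I -> y \in I -> x * y = 0) ->
        roughly_complemented T -> rough_compl_in S /\ atorsion_in S I)) /\
  (forall (R : comPzRingType) (M : lmodType R),
     roughly_complemented (idealization M) <->
     roughly_complemented R /\ atorsion M).
Proof.
split.
  move=> T S I hS hI dec disj; split; first exact: part1a.
  exact: part1b.
move=> R M; rewrite -(rcE R M) -(atE R M); split.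
  apply: part1b; [exact: hypS | exact: hypI | exact: hypdec | exact: hypdisj | exact: hypI2].
case=> h1 h2; apply: part1a h1 h2; [exact: hypS | exact: hypI | exact: hypdec].
Qed.
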